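(* Let $S$ be a financial system with payment priorities, $v$ a bank, $x\ge 0$, and $Q\ge 0$ a number such that every solution $r$ of $S$ satisfies $q_v(r)\le Q$. Let $S'$ be the system obtained from $S$ by replacing $e_v$ with $e_v+x$ (everything else unchanged). Then every solution $r'$ of $S'$ satisfies $q'_v(r')\le Q+x$, where $q'_v$ is the payoff of $v$ in $S'$. More precisely, if $r'$ is a solution of $S'$ with $q'_v(r')>x$, then $r'$ is also a solution of $S$ and $q_v(r')=q'_v(r')-x$.
   Context: A financial system with payment priorities consists of: a finite set $V$ of banks; external assets $e_v\ge 0$ for each $v\in V$; a number $P\ge 1$ of priority levels; and a finite set of contracts, each of which is either a debt contract from a debtor $u$ to a creditor $v\neq u$ with weight $c>0$, or a credit default swap (CDS) from a debtor $u$ to a creditor $v\neq u$ in reference to a bank $w\notin\{u,v\}$ (the reference entity) with weight $c>0$. Every contract has a priority in $\{1,\dots,P\}$ (1 is the highest priority). It is assumed that every bank that is the reference entity of some CDS is the debtor of at least one debt contract of positive weight. Given a recovery rate vector $r\in[0,1]^V$: the liability of a contract $k$ is $l_k(r)=c$ if $k$ is a debt of weight $c$, and $l_k(r)=c\,(1-r_w)$ if $k$ is a CDS of weight $c$ in reference to $w$. For a bank $v$, $l_v(r)$ is the sum of the liabilities of the contracts with debtor $v$; $l_v^{(\rho)}(r)$ is the sum of the liabilities of contracts with debtor $v$ and priority $\rho$; and $l_v^{(\le\rho)}(r)=\sum_{i=1}^{\rho}l_v^{(i)}(r)$ (with $l_v^{(\le 0)}=0$). The payment on a contract $k$ with debtor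 $v$ and priority $\rho$ is $p_k(r)=l_k(r)\cdot\min\{1,\max\{0,(r_v l_v(r)-l_v^{(\le\rho-1)}(r))/l_v^{(\rho)}(r)\}\}$ (and $p_k(r)=0$ if $l_v^{(\rho)}(r)=0$). The assets of $v$ are $a_v(r)=e_v+\sum_k p_k(r)$, summing over contracts $k$ with creditor $v$. A vector $r\in[0,1]^V$ is a solution (clearing vector) if for every $v\in V$: $r_v=1$ when $a_v(r)\ge l_v(r)$, and $r_v=a_v(r)/l_v(r)$ when $a_v(r)<l_v(r)$. The payoff of $v$ is $q_v(r)=\max\{a_v(r)-l_v(r),0\}$. When $P=1$, payments reduce to $p_k(r)=r_v\,l_k(r)$ (principle of proportionality); this is called the base model. *)

(* Defs.v *)
From HB Require Import structures.
From mathcomp Require Import all_boot all_order all_algebra.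
Set Implicit Arguments. Unset Strict Implicit. Unset Printing Implicit Defensive.
Import Order.TTheory GRing.Theory Num.Theory.
Local Open Scope ring_scope.

(* A financial system with payment priorities, without the external assets
   (which are passed separately, so that S' only differs in e).  Contracts: finite type K.
   ref k = None  : k is a debt contract;
   ref k = Some w: k is a CDS in reference to w. *)
Record fsystem (R : realFieldType) (V K : finType) := FSystem {
  nprio : nat;
  debtor : K -> V;
  creditor : K -> V;
  weight : K -> R;
  ref : K -> option V;
  prio : K -> nat
}.

Section Model.
Variables (R : realFieldType) (V K : finType) (S : fsystem R V K) (e : V -> R).

Definition wf_system : Prop :=
  (forall u, 0 <= e u) /\
  (1 <= nprio S)%N /\
  (forall k, debtor S k <> creditor S k) /\
  (forall k, 0 < weight S k) /\
  (forall k w, ref S k = Some w -> w <> debtor S k /\ w <> creditor S k) /\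
  (forall k, (1 <= prio S k <= nprio S)%N) /\
  (forall k w, ref S k = Some w ->
     exists k', debtor S k' = w /\ ref S k' = None /\ 0 < weight S k').

Definition liab (r : V -> R) (k : K) : R :=
  match ref S k with
  | None => weight S k
  | Some w => weight S k * (1 - r w)
  end.

Definition lv (r : V -> R) (u : V) : R :=
  \sum_(k | debtor S k == u) liab r k.

Definition lvp (r : V -> R) (u : V) (rho : nat) : R :=
  \sum_(k | (debtor S k == u) && (prio S k == rho)) liab r k.

Definition lvle (r : V -> R) (u : V) (rho : nat) : R :=
  \sum_(1 <= i < rho.+1) lvp r u i.

Definition pay (r : V -> R) (k : K) : R :=
  let u := debtor S k in
  let rho := prio S k in
  if lvp r u rho == 0 then 0
  else liab r k * Num.min 1 (Num.max 0 ((r u * lv r u - lvle r u rho.-1) / lvp r u rho)).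

Definition assets (r : V -> R) (u : V) : R :=
  e u + \sum_(k | creditor S k == u) pay r k.

Definition is_solution (r : V -> R) : Prop :=
  (forall u, 0 <= r u <= 1) /\
  (forall u, (lv r u <= assets r u -> r u = 1) /\
             (assets r u < lv r u -> r u = assets r u / lv r u)).

Definition payoff (r : V -> R) (u : V) : R :=
  Num.max (assets r u - lv r u) 0.

End Model.

Definition add_ext (R : realFieldType) (V : finType) (e : V -> R) (v : V) (x : R)
  : V -> R := fun u => if u == v then e u + x else e u.

(* Main.v *)
Require Import Defs.
From HB Require Import structures.
From mathcomp Require Import all_boot all_order all_algebra.
From mathcomp Require Import lra.
Import Order.TTheory GRing.Theory Num.Theory.
Local Open Scope ring_scope.

Lemma assets_add (R : realFieldType) (V K : finType) (S : fsystem R V K)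
  (e : V -> R) (v : V) (x : R) r u :
  assets S (add_ext e v x) r u = assets S e r u + (if u == v then x else 0).
Proof.
rewrite /assets /add_ext; case: (u == v); rewrite ?addr0 //.
by rewrite -!addrA [x + _]addrC.
Qed.

Lemma part2 (R : realFieldType) (V K : finType) (S : fsystem R V K)
  (e : V -> R) (v : V) (x : R) :
  0 <= x ->
  (forall r' : V -> R, is_solution S (add_ext e v x) r' ->
      x < payoff S (add_ext e v x) r' v ->
      is_solution S e r' /\
      payoff S e r' v = payoff S (add_ext e v x) r' v - x).
Proof.
move=> x0 r [H01 Hs] Hq.
have Hpos : x < assets S e r v + x - lv S r v.
  move: Hq; rewrite /payoff assets_add eqxx /=.
  case: (leP (assets S e r v + x - lv S r v) 0) => h //.
  by rewrite ltNge x0.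
have Hal : lv S r v < assets S e r v.
  by lra.
split.
  split=> // u; have [->|nuv] := eqVneq u v.
    split=> [_|h]; last by exfalso; move: (lt_trans h Hal); rewrite ltxx.
    apply: (Hs v).1; rewrite assets_add eqxx /=.
    by apply: ltW; apply: (lt_le_trans Hal); rewrite lerDl.
  by move: (Hs u); rewrite assets_add (negbTE nuv) addr0.
rewrite /payoff assets_add eqxx /= !max_l.
- by lra.
- by rewrite ltW // (le_lt_trans x0 Hpos).
- by rewrite subr_ge0 ltW.
Qed.

Theorem mainTheorem5 (R : realFieldType) (V K : finType) (S : fsystem R V K)
  (e : V -> R) (v : V) (x Q : R) :
  wf_system S e -> 0 <= x -> 0 <= Q ->
  (forall r : V -> R, is_solution S e r -> payoff S e r v <= Q) ->
  (forall r' : V -> R, is_solution S (add_ext e v x) r' ->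
      payoff S (add_ext e v x) r' v <= Q + x) /\
  (forall r' : V -> R, is_solution S (add_ext e v x) r' ->
      x < payoff S (add_ext e v x) r' v ->
      is_solution S e r' /\
      payoff S e r' v = payoff S (add_ext e v x) r' v - x).
Proof.
move=> _ x0 Q0 HQ.
have P2 := @part2 R V K S e v x x0.
split=> // r Hs.
case: (leP (payoff S (add_ext e v x) r v) x) => h.
  by apply: (le_trans h); rewrite lerDr.
have [Hs' Heq] := P2 r Hs h.
have := HQ r Hs'; rewrite Heq lerBlDr //.
Qed.
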